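(* Let $(A,B)$ be a finite-dimensional associative superalgebra over an algebraically closed field $\mathbb{K}$ of characteristic zero endowed with a homogeneous symmetric structure $B$. Then $A$ is an orthogonal (with respect to $B$) direct sum of $B$-irreducible graded two-sided ideals.
   Context: A superalgebra is $\mathbb{Z}_2$-graded, $A=A_{\bar 0}\oplus A_{\bar 1}$, $A_\alpha A_\beta\subseteq A_{\alpha+\beta}$. A homogeneous symmetric structure on $A$ is a bilinear form $B$ which is either even ($B(A_{\bar 0},A_{\bar 1})=0$) or odd ($B(A_{\bar 0},A_{\bar 0})=B(A_{\bar 1},A_{\bar 1})=0$), and is supersymmetric ($B(x,y)=(-1)^{|x||y|}B(y,x)$ for homogeneous $x,y$), associative ($B(xy,z)=B(x,yz)$) and non-degenerate. A graded two-sided ideal $I$ of $A$ is non-degenerate if $B|_{I\times I}$ is non-degenerate, and it is $B$-irreducible if it is non-degenerate and contains no non-degenerate graded two-sided ideal of $A$ other than $\{0\}$ and $I$. *)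

(* Defs.v *)
From HB Require Import structures.
From mathcomp Require Import all_boot all_order all_algebra.
Set Implicit Arguments. Unset Strict Implicit. Unset Printing Implicit Defensive.
Import GRing.Theory.
Local Open Scope ring_scope.

(* A finite-dimensional (not necessarily unital) associative superalgebra over K
   is modelled as a vector space V : vectType K with a bilinear associative
   product [mul] and a Z2-grading [Ag : bool -> {vspace V}] (false = even,
   true = odd) with V = Ag false (+) Ag true. *)

Section Super.
Variables (K : fieldType) (V : vectType K).

Definition bilinear_mul (mul : V -> V -> V) : Prop :=
  (forall a x y z, mul (a *: x + y) z = a *: mul x z + mul y z) /\
  (forall a x y z, mul x (a *: y + z) = a *: mul x y + mul x z).

Definition associative_mul (mul : V -> V -> V) : Prop :=
  forall x y z, mul (mul x y) z = mul x (mul y z).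

Definition Z2_grading (Ag : bool -> {vspace V}) : Prop :=
  directv (Ag false + Ag true)%VS /\ (Ag false + Ag true = fullv)%VS.

Definition graded_mul (mul : V -> V -> V) (Ag : bool -> {vspace V}) : Prop :=
  forall (a b : bool) x y, x \in Ag a -> y \in Ag b -> mul x y \in Ag (a (+) b).

Definition superalgebra (mul : V -> V -> V) (Ag : bool -> {vspace V}) : Prop :=
  [/\ bilinear_mul mul, associative_mul mul, Z2_grading Ag & graded_mul mul Ag].

Definition bilinear_form (B : V -> V -> K) : Prop :=
  (forall a x y z, B (a *: x + y) z = a * B x z + B y z) /\
  (forall a x y z, B x (a *: y + z) = a * B x y + B x z).

Definition even_form (Ag : bool -> {vspace V}) (B : V -> V -> K) : Prop :=
  forall x y, x \in Ag false -> y \in Ag true -> B x y = 0.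

Definition odd_form (Ag : bool -> {vspace V}) (B : V -> V -> K) : Prop :=
  (forall x y, x \in Ag false -> y \in Ag false -> B x y = 0) /\
  (forall x y, x \in Ag true -> y \in Ag true -> B x y = 0).

Definition supersymmetric (Ag : bool -> {vspace V}) (B : V -> V -> K) : Prop :=
  forall (a b : bool) x y, x \in Ag a -> y \in Ag b ->
    B x y = (-1) ^+ (a && b) * B y x.

Definition associative_form (mul : V -> V -> V) (B : V -> V -> K) : Prop :=
  forall x y z, B (mul x y) z = B x (mul y z).

Definition nondegenerate (B : V -> V -> K) : Prop :=
  forall x, (forall y, B x y = 0) -> x = 0.

Definition homogeneous_symmetric_structure (mul : V -> V -> V)
    (Ag : bool -> {vspace V}) (B : V -> V -> K) : Prop :=
  [/\ bilinear_form B, even_form Ag B \/ odd_form Ag B, supersymmetric Ag B,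
      associative_form mul B & nondegenerate B].

Definition graded_ideal (mul : V -> V -> V) (Ag : bool -> {vspace V})
    (I : {vspace V}) : Prop :=
  (I = (I :&: Ag false) + (I :&: Ag true))%VS /\
  (forall x y, x \in I -> mul x y \in I /\ mul y x \in I).

Definition nondegenerate_on (B : V -> V -> K) (I : {vspace V}) : Prop :=
  forall x, x \in I -> (forall y, y \in I -> B x y = 0) -> x = 0.

Definition nondegenerate_ideal mul Ag B (I : {vspace V}) : Prop :=
  graded_ideal mul Ag I /\ nondegenerate_on B I.

Definition B_irreducible mul Ag B (I : {vspace V}) : Prop :=
  nondegenerate_ideal mul Ag B I /\
  (forall J : {vspace V}, nondegenerate_ideal mul Ag B J -> (J <= I)%VS ->
     J = 0%VS \/ J = I).

End Super.

(* Main.v *)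
From HB Require Import structures.
From mathcomp Require Import all_boot all_order all_algebra zify.
From Stdlib Require Import Classical.
Require Import Defs.
Set Implicit Arguments. Unset Strict Implicit. Unset Printing Implicit Defensive.
Import GRing.Theory.
Local Open Scope ring_scope.

Section Perp.
Variables (K : fieldType) (V : vectType K) (B : V -> V -> K) (hB : bilinear_form B) (U : {vspace V}).

Lemma tt0 (t : K) : t = t + t -> t = 0.
Proof. by move/(congr1 (fun u => u - t)); rewrite subrr addrK. Qed.
Lemma Bl0 z : B 0 z = 0.
Proof. by apply: tt0; have := hB.1 1 0 0 z; rewrite scaler0 addr0 mul1r. Qed.
Lemma Br0 z : B z 0 = 0.
Proof. by apply: tt0; have := hB.2 1 z 0 0; rewrite scaler0 addr0 mul1r. Qed.
Lemma BlD x y z : B (x + y) z = B x z + B y z.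
Proof. by have := hB.1 1 x y z; rewrite scale1r mul1r. Qed.
Lemma BrD x y z : B z (x + y) = B z x + B z y.
Proof. by have := hB.2 1 z x y; rewrite scale1r mul1r. Qed.
Lemma BlZ a x z : B (a *: x) z = a * B x z.
Proof. by have := hB.1 a x 0 z; rewrite addr0 Bl0 addr0. Qed.
Lemma BrZ a x z : B z (a *: x) = a * B z x.
Proof. by have := hB.2 a z x 0; rewrite addr0 Br0 addr0. Qed.
Lemma BlB x y z : B (x - y) z = B x z - B y z.
Proof. by rewrite BlD -scaleN1r BlZ mulN1r. Qed.

Definition perpf (x : V) : 'rV[K]_(\dim U) := \row_i B x (tnth (vbasis U) i).
Fact perpf_lin : linear perpf.
Proof. by move=> a x y; apply/rowP=> i; rewrite !mxE BlD BlZ. Qed.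
HB.instance Definition _ := GRing.isLinear.Build K V 'rV_(\dim U) *:%R perpf perpf_lin.
Definition perp := lker (linfun perpf).

Lemma mem_perp x : (x \in perp) <-> forall y, y \in U -> B x y = 0.
Proof.
rewrite memv_ker lfunE /=; split.
  move/eqP=> h y /coord_vbasis ->.
  elim/big_rec: _ => [|i s _ IH]; first by rewrite Br0.
  rewrite BrD BrZ IH addr0.
  have := congr1 (fun m : 'rV[K]_(\dim U) => m 0 i) h; rewrite !mxE (tnth_nth 0) => ->.
  by rewrite mulr0.
move=> h; apply/eqP/rowP=> i; rewrite !mxE; apply: h.
by apply: vbasis_mem; apply: mem_tnth.
Qed.

Lemma dim_perp : (\dim (fullv : {vspace V}) <= \dim perp + \dim U)%N.
Proof.
have := limg_ker_dim (linfun perpf) fullv.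
rewrite capfv => <-; rewrite leq_add2l.
apply: leq_trans (dimvS (subvf _)) _.
by rewrite dimvf dim_matrix mul1r.
Qed.
End Perp.

Lemma testA (K:fieldType)(V:vectType K)(a b : V) : a + b - b = a.
Proof. by rewrite addrK. Qed.

Section Main.
Variables (K : fieldType) (V : vectType K) (mul : V -> V -> V)
  (Ag : bool -> {vspace V}) (B : V -> V -> K).
Hypotheses (hA : superalgebra mul Ag) (hS : homogeneous_symmetric_structure mul Ag B).

Let hB : bilinear_form B. Proof. by case: hS. Qed.
Let hEO : even_form Ag B \/ odd_form Ag B. Proof. by case: hS. Qed.
Let hSS : supersymmetric Ag B. Proof. by case: hS. Qed.
Let hAs : associative_form mul B. Proof. by case: hS. Qed.
Let hND : nondegenerate B. Proof. by case: hS. Qed.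

Definition homdec (U : {vspace V}) := forall x, x \in U -> exists x0 x1,
  [/\ x0 \in U, x0 \in Ag false, x1 \in U, x1 \in Ag true & x = x0 + x1].

Lemma decomp I : graded_ideal mul Ag I -> homdec I.
Proof.
move=> [hI _] x; rewrite {1}hI => /memv_addP [u /memv_capP[? ?] [v /memv_capP[? ?] ->]].
by exists u, v.
Qed.

Lemma sym0 a b x y : x \in Ag a -> y \in Ag b -> B y x = 0 -> B x y = 0.
Proof. by move=> hx hy; rewrite (hSS hx hy) => ->; rewrite mulr0. Qed.

Lemma orth_flip P Q : homdec P -> homdec Q ->
  (forall x y, x \in P -> y \in Q -> B x y = 0) ->
  forall y x, y \in Q -> x \in P -> B y x = 0.
Proof.
move=> dP dQ h y x yQ xP.
have [y0 [y1 [y0Q y0A y1Q y1A ->]]] := dQ y yQ.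
have [x0 [x1 [x0P x0A x1P x1A ->]]] := dP x xP.
rewrite !(BlD hB) !(BrD hB).
rewrite (sym0 y0A x0A (h _ _ x0P y0Q)) (sym0 y0A x1A (h _ _ x1P y0Q)).
rewrite (sym0 y1A x0A (h _ _ x0P y1Q)) (sym0 y1A x1A (h _ _ x1P y1Q)).
by rewrite !addr0.
Qed.

Section Split.
Variables (J I : {vspace V}).
Hypotheses (hJ : nondegenerate_ideal mul Ag B J) (hI : nondegenerate_ideal mul Ag B I)
  (IJ : (I <= J)%VS) (I0 : I != 0%VS).

Definition J' := (J :&: perp B I)%VS.

Lemma memJ' x : x \in J' <-> x \in J /\ forall y, y \in I -> B x y = 0.
Proof.
rewrite /J' memv_cap; split.
  by case/andP=> -> /(mem_perp hB).
by case=> -> h; apply/(mem_perp hB).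
Qed.

Lemma J'hom x : x \in J' -> exists x0 x1,
  [/\ x0 \in J', x0 \in Ag false, x1 \in J', x1 \in Ag true & x = x0 + x1].
Proof.
move=> /memJ' [xJ xo].
have [x0 [x1 [x0J x0A x1J x1A ex]]] := decomp hJ.1 xJ.
have ex0 : x0 = x - x1 by rewrite ex addrK.
have ex1 : x1 = x - x0 by rewrite ex (addrC x0) addrK.
have dI := decomp hI.1.
suff [h0 h1] : (forall y, y \in I -> B x0 y = 0) /\ (forall y, y \in I -> B x1 y = 0).
  by exists x0, x1; split=> //; apply/memJ'.
split=> y /dI [y0 [y1 [y0I y0A y1I y1A ->]]]; rewrite !(BrD hB).
- case: hEO => [ev|[od0 od1]].
    rewrite (ev _ _ x0A y1A) addr0 ex0 (BlB hB) (xo _ y0I).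
    by rewrite (sym0 x1A y0A (ev _ _ y0A x1A)) subrr.
  rewrite (od0 _ _ x0A y0A) add0r ex0 (BlB hB) (xo _ y1I).
  by rewrite (od1 _ _ x1A y1A) subrr.
- case: hEO => [ev|[od0 od1]].
    rewrite (sym0 x1A y0A (ev _ _ y0A x1A)) add0r ex1 (BlB hB) (xo _ y1I).
    by rewrite (ev _ _ x0A y1A) subrr.
  rewrite (od1 _ _ x1A y1A) addr0 ex1 (BlB hB) (xo _ y0I).
  by rewrite (od0 _ _ x0A y0A) subrr.
Qed.

Lemma J'hd : homdec J'.
Proof. move=> x /J'hom [x0 [x1 [? ? ? ? ?]]]; by exists x0, x1. Qed.

Lemma orthJ'I x y : x \in J' -> y \in I -> B x y = 0.
Proof. by move=> /memJ' [_ h]; apply: h. Qed.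

Lemma orthIJ' y x : y \in I -> x \in J' -> B y x = 0.
Proof. exact: (orth_flip J'hd (decomp hI.1) orthJ'I). Qed.

Lemma capIJ' : (I :&: J' = 0)%VS.
Proof.
apply/eqP; rewrite -subv0; apply/subvP=> x /memv_capP [xI xJ']; rewrite memv0.
apply/eqP; apply: hI.2 => // y yI; exact: orthJ'I.
Qed.

Lemma J'J : (J' <= J)%VS.
Proof. exact: capvSl. Qed.

Lemma dimIJ' : (\dim J <= \dim I + \dim J')%N.
Proof.
have := dimv_sum_cap J (perp B I).
have := dim_perp B I.
have := dimvS (subvf (J + perp B I)%VS).
rewrite /J'; lia.
Qed.

Lemma addIJ' : (I + J' = J)%VS.
Proof.
apply/eqP; rewrite eqEdim subv_add IJ J'J /=.
by rewrite dimv_disjoint_sum ?capIJ' ?dimIJ'.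
Qed.

Lemma dimJ'lt : (\dim J' < \dim J)%N.
Proof.
rewrite -addIJ' dimv_disjoint_sum ?capIJ' //.
have : (\dim I != 0)%N by rewrite dimv_eq0.
lia.
Qed.

Lemma J'ND : nondegenerate_ideal mul Ag B J'.
Proof.
split; first split.
- apply/eqP; rewrite eqEsubv subv_add !capvSl !andbT.
  apply/subvP=> x /J'hom [x0 [x1 [x0J x0A x1J x1A ->]]].
  by apply: memv_add; rewrite memv_cap ?x0J ?x1J.
- move=> x z xJ'.
  have [xJ xo] := (memJ' x).1 xJ'.
  have mxy : forall y, y \in I -> mul x y = 0.
    move=> y yI; apply: hND => w.
    by rewrite hAs; apply: xo; exact: (hI.1.2 y w yI).1.
  split; apply/memJ'; split.
  + exact: (hJ.1.2 x z xJ).1.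
  + by move=> y yI; rewrite hAs; apply: xo; exact: (hI.1.2 y z yI).2.
  + exact: (hJ.1.2 x z xJ).2.
  + by move=> y yI; rewrite hAs mxy // (Br0 hB).
- move=> x xJ' h; apply: hJ.2; first exact: (subvP J'J).
  move=> y; rewrite -addIJ' => /memv_addP [u uI [v vJ' ->]].
  by rewrite (BrD hB) (orthJ'I xJ' uI) h // add0r.
Qed.

End Split.

Lemma exists_irr m J : (\dim J <= m)%N -> nondegenerate_ideal mul Ag B J -> J != 0%VS ->
  exists I, [/\ B_irreducible mul Ag B I, (I <= J)%VS & I != 0%VS].
Proof.
elim: m J => [|m IH] J.
  by rewrite leqn0 dimv_eq0 => ->.
move=> dJ hJ J0.
case: (classic (forall K', nondegenerate_ideal mul Ag B K' -> (K' <= J)%VS ->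
     K' = 0%VS \/ K' = J)) => [h|].
  by exists J; split.
move=> /not_all_ex_not [K' hK'].
have hKN := not_imply_elim _ _ hK'. have hK2 := not_imply_elim2 _ _ hK'.
have KJ := not_imply_elim _ _ hK2.
have [K0 KnJ] := not_or_and _ _ (not_imply_elim2 _ _ hK2).
have : (\dim K' < \dim J)%N.
  rewrite ltn_neqAle dimvS // andbT.
  apply: contra_notN KnJ => /eqP e; apply/eqP; rewrite eqEdim KJ e leqnn.
  done.
move=> lt; have dK : (\dim K' <= m)%N by lia.
have [I [Ii IK I0]] := IH K' dK hKN (introN eqP K0).
by exists I; split=> //; apply: subv_trans IK KJ.
Qed.

Definition orthfam n (Is : 'I_n -> {vspace V}) := forall i j : 'I_n, i != j ->
  forall x y, x \in Is i -> y \in Is j -> B x y = 0.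

Lemma zero_case J : J = 0%VS -> exists n (Is : 'I_n -> {vspace V}),
    [/\ forall i, B_irreducible mul Ag B (Is i),
        directv (\sum_(i < n) Is i)%VS,
        (\sum_(i < n) Is i)%VS = J & orthfam Is].
Proof.
move=> ->; exists 0%N, (fun _ => 0%VS); split.
- by case.
- by rewrite directvE /= !big_ord0 dimv0.
- by rewrite big_ord0.
- by case.
Qed.

Lemma decomp_all m J : (\dim J <= m)%N -> nondegenerate_ideal mul Ag B J ->
  exists n (Is : 'I_n -> {vspace V}),
    [/\ forall i, B_irreducible mul Ag B (Is i),
        directv (\sum_(i < n) Is i)%VS,
        (\sum_(i < n) Is i)%VS = J & orthfam Is].
Proof.
elim: m J => [|m IH] J dJ hJ.
  by apply: zero_case; apply/eqP; rewrite -dimv_eq0; lia.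
have [J0|J0] := eqVneq J 0%VS; first exact: zero_case.
have [I [Ii IJ I0]] := exists_irr (leqnn _) hJ J0.
have hI := Ii.1.
have hJ2 := J'ND hJ hI IJ I0.
have lt := dimJ'lt hI IJ I0.
have dJ2 : (\dim (J' J I) <= m)%N by lia.
have [n [Is [Iirr Idir Isum Iorth]]] := IH _ dJ2 hJ2.
pose F := fun i : 'I_n.+1 => if unlift ord0 i is Some j then Is j else I.
have FE : (\sum_(i < n.+1) F i = I + \sum_(j < n) Is j)%VS.
  rewrite big_ord_recl /F unlift_none; congr (_ + _)%VS.
  by apply: eq_bigr => j _; rewrite liftK.
have IsJ2 : forall j x, x \in Is j -> x \in J' J I.
  move=> j x xI; rewrite -Isum; apply: (subvP (sumv_sup j _ (subvv _))) => //.
exists n.+1, F; split.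
- by move=> i; rewrite /F; case: (unliftP ord0 i) => [j _|_].
- rewrite directvE /= FE big_ord_recl /F unlift_none.
  rewrite dimv_disjoint_sum; last by rewrite Isum capIJ'.
  move/directvP: Idir => /= ->.
  by apply/eqP; congr (_ + _)%N; apply: eq_bigr => j _; rewrite liftK.
- by rewrite FE Isum addIJ'.
- move=> i j; rewrite /F.
  case: (unliftP ord0 i) => [i' ->|->]; case: (unliftP ord0 j) => [j' ->|->] //.
  + by rewrite (inj_eq (@lift_inj _ ord0)) => /Iorth.
  + by move=> _ x y /IsJ2 xJ yI; apply: orthJ'I xJ yI.
  + by move=> _ x y xI /IsJ2 yJ; apply: orthIJ' hJ hI _ _ xI yJ.
Qed.

End Main.

Theorem mainTheorem7 (K : closedFieldType) (charK0 : [pchar K] =i pred0)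
    (V : vectType K) (mul : V -> V -> V) (Ag : bool -> {vspace V}) (B : V -> V -> K) :
  superalgebra mul Ag -> homogeneous_symmetric_structure mul Ag B ->
  exists (n : nat) (Is : 'I_n -> {vspace V}),
    [/\ forall i, B_irreducible mul Ag B (Is i),
        directv (\sum_(i < n) Is i)%VS,
        (\sum_(i < n) Is i)%VS = fullv &
        forall i j : 'I_n, i != j -> forall x y, x \in Is i -> y \in Is j -> B x y = 0].
Proof.
move=> hA hS.
have hF : nondegenerate_ideal mul Ag B fullv.
  split; first split.
  - by rewrite !capfv; case: hA => _ _ [_ ->].
  - by move=> x y _; rewrite !memvf.
  - by move=> x _ h; case: hS => _ _ _ _; apply; move=> y; apply: h; apply: memvf.
exact: (decomp_all hS (leqnn _) hF).
Qed.
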